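(* Let $\varphi$ be a random dynamical system with memoryless noise on $X$ (setting in the context), let $\rho$ be a stationary probability measure of the Markov transition probabilities $(\varphi_x^t)$, and let $\mu_\rho$ be the unique past-measurable invariant measure of $\varphi$ satisfying $\pi_{X*}\mu_\rho=\rho$. Then $\mu_\rho$ is the only probability measure $\mu'$ on $(\Omega\times X,\mathcal{F}\otimes\mathcal{B}(X))$ that is invariant under $\Theta^t$ for all $t\in\mathbb{T}^+$ and whose restriction to $\mathcal{F}_0^\infty\otimes\mathcal{B}(X)$ coincides with $\mathbb{P}|_{\mathcal{F}_0^\infty}\otimes\rho$.
   Context: Setting. $\mathbb{T}$ is $\mathbb{Z}$ or $\mathbb{R}$, $\mathbb{T}^+ := \mathbb{T}\cap[0,\infty)$. $(\Omega,\mathcal{F})$ is a measurable space with sub-$\sigma$-algebras $(\mathcal{F}_s^{s+t})_{s\in\mathbb{T},t\in\mathbb{T}^+}$ such that $\mathcal{F}_{t_1}^{t_2}\subset\mathcal{F}_{t_0}^{t_3}$ whenever $t_0\le t_1\le t_2\le t_3$, and these generate $\mathcal{F}$. Write $\mathcal{F}_s^\infty:=\sigma(\mathcal{F}_s^{s+t}:t\in\mathbb{T}^+)$ and $\mathcal{F}_{-\infty}^t:=\sigma(\mathcal{F}_{t-s}^t:s\in\mathbb{T}^+)$. $(\theta^t)_{t\in\mathbb{T}}$ is a group of measurable maps $\Omega\to\Omega$ with $\theta^\tau\mathcal{F}_s^t=\mathcal{F}_{s-\tau}^{t-\tau}$. $\mathbb{P}$ is a probability measure on $(\Omega,\mathcal{F})$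 with $\theta^t_*\mathbb{P}=\mathbb{P}$, and such that for each $t$, $\mathcal{F}_{-\infty}^t$ and $\mathcal{F}_t^\infty$ are $\mathbb{P}$-independent. $(X,d)$ is a separable metric space which is a Borel subset of its $d$-completion. $\varphi=(\varphi(t,\omega))_{t\in\mathbb{T}^+,\omega\in\Omega}$ is a family of continuous maps $X\to X$ such that (a) $\omega\mapsto\varphi(t,\omega)x$ is $(\mathcal{F}_0^t,\mathcal{B}(X))$-measurable; (b) $\varphi(0,\omega)=\mathrm{id}_X$; (c) $\varphi(s+t,\omega)=\varphi(t,\theta^s\omega)\circ\varphi(s,\omega)$; (d) if $t_n\downarrow t$ in $\mathbb{T}^+$ and $x_n\to x$ then $\varphi(t_n,\omega)x_n\to\varphi(t,\omega)x$ for all $\omega$. Transition probabilities: $\varphi_x^t(A):=\mathbb{P}(\omega:\varphi(t,\omega)x\in A)$; $\rho$ is stationary if $\rho(A)=\int\varphi_x^t(A)\rho(dx)$ for all $t,A$. $\Theta^t(\omega,x):=(\theta^t\omega,\varphi(t,\omega)x)$; $\pi_\Omega,\pi_X$ are the projections of $\Omega\times X$. Definitions. A probability measure $\mu$ on $(\Omega\times X,\mathcal{F}\otimes\mathcal{B}(X))$ is $\mathbb{P}$-compatible if $\pi_{\Omega*}\mu=\mathbb{P}$; such $\mu$ has a disintegration $(\mu_\omega)_{\omega\in\Omega}$ (a measurable family of probability measures on $X$ with $\mu(A)=\int\mu_\omega(\{x:(\omega,x)\in A\})\mathbb{P}(d\omega)$), unique up to $\mathbb{P}$-a.e. equality. $\mu$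 is past-measurable if it admits a disintegration with $\omega\mapsto\mu_\omega(A)$ being $\mathcal{F}_{-\infty}^0$-measurable for all Borel $A$. An invariant measure of $\varphi$ is a $\mathbb{P}$-compatible probability measure invariant under all $\Theta^t$, $t\in\mathbb{T}^+$. It is known (and assumed here) that for each stationary $\rho$ there is a unique past-measurable invariant measure $\mu_\rho$ of $\varphi$ with $\pi_{X*}\mu_\rho=\rho$. *)

(* Defs.v *)
From HB Require Import structures.
From mathcomp Require Import all_boot all_order all_algebra.
From mathcomp Require Import all_classical all_reals all_analysis.
From mathcomp Require Import measurable_realfun.

Set Implicit Arguments.
Unset Strict Implicit.
Unset Printing Implicit Defensive.

Import Order.TTheory GRing.Theory Num.Theory.
Import numFieldNormedType.Exports.
Local Open Scope classical_set_scope.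
Local Open Scope ring_scope.

Section Defs.
Context {R : realType}.

(* Time set: T = Z (tZ = true) or T = R (tZ = false), embedded in R. *)
Definition Tset (tZ : bool) : set R :=
  if tZ then [set x | exists z : int, x = z%:~R] else setT.
Definition Tplus (tZ : bool) : set R := [set t | Tset tZ t /\ 0 <= t].

Context {d : measure_display} {Omega : measurableType d}.

(* Fil s t = F_s^t, meaningful for s <= t in T *)
Definition is_filtration (tZ : bool) (Fil : R -> R -> set (set Omega)) :=
  [/\ (forall s t, Tset tZ s -> Tset tZ t -> s <= t ->
         sigma_algebra setT (Fil s t) /\ Fil s t `<=` measurable),
      (forall t0 t1 t2 t3, Tset tZ t0 -> Tset tZ t1 -> Tset tZ t2 -> Tset tZ t3 ->
         t0 <= t1 -> t1 <= t2 -> t2 <= t3 -> Fil t1 t2 `<=` Fil t0 t3) &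
      (@measurable _ Omega =
         <<s [set A | exists s t, [/\ Tset tZ s, Tset tZ t, s <= t & Fil s t A]] >>)].

Definition Future (tZ : bool) (Fil : R -> R -> set (set Omega)) (s : R) :=
  <<s [set A | exists t, Tplus tZ t /\ Fil s (s + t) A] >>.
Definition Past (tZ : bool) (Fil : R -> R -> set (set Omega)) (t : R) :=
  <<s [set A | exists s, Tplus tZ s /\ Fil (t - s) t A] >>.

Definition is_shift (tZ : bool) (Fil : R -> R -> set (set Omega))
    (theta : R -> Omega -> Omega) :=
  [/\ (forall t, Tset tZ t -> measurable_fun setT (theta t)),
      theta 0 = id,
      (forall s t, Tset tZ s -> Tset tZ t -> theta (s + t) = theta s \o theta t) &
      (forall tau s t, Tset tZ tau -> Tset tZ s -> Tset tZ t -> s <= t ->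
         [set theta tau @` A | A in Fil s t] = Fil (s - tau) (t - tau))].

Definition memoryless_noise (tZ : bool) (Fil : R -> R -> set (set Omega))
    (theta : R -> Omega -> Omega) (P : probability Omega R) :=
  (forall t, Tset tZ t -> forall A, measurable A -> P (theta t @^-1` A) = P A) /\
  (forall t, Tset tZ t -> forall A B, Past tZ Fil t A -> Future tZ Fil t B ->
     P (A `&` B) = (P A * P B)%E).

End Defs.

Definition Borel {R : realType} (X : pseudoPMetricType R) :=
  g_sigma_algebraType (@open X).

(* X is a Borel subset of its completion: there is an isometric embedding of
   X into a complete metric space whose image is a Borel set. *)
Definition Borel_in_completion {R : realType} (X : pseudoPMetricType R) :=
  exists (Y : completePseudoMetricType R) (i : X -> Y),
    [/\ hausdorff_space Y,
        (forall (x y : X) (e : R), ball x e y <-> ball (i x) e (i y)) &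
        <<s @open Y >> (range i)].

Definition good_space {R : realType} (X : pseudoPMetricType R) :=
  [/\ hausdorff_space X,
      (exists D : set X, countable D /\ dense D) &
      Borel_in_completion X].

Section RDS.
Context {R : realType} {d : measure_display} {Omega : measurableType d}
  {X : pseudoPMetricType R}.
Local Open Scope classical_set_scope.
Local Open Scope ring_scope.

Definition is_RDS (tZ : bool) (Fil : R -> R -> set (set Omega))
    (theta : R -> Omega -> Omega) (phi : R -> Omega -> X -> X) :=
  [/\ (forall t w, Tplus tZ t -> continuous (phi t w)),
      (forall t (x : X), Tplus tZ t -> forall B : set (Borel X), measurable B ->
         Fil 0 t ((fun w => phi t w x) @^-1` B)),
      (forall w, phi 0 w = id),
      (forall s t w, Tplus tZ s -> Tplus tZ t ->
         phi (s + t) w = phi t (theta s w) \o phi s w) &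
      (forall (w : Omega) (tn : nat -> R) (t : R) (xn : nat -> X) (x : X),
         (forall n, Tplus tZ (tn n)) -> Tplus tZ t ->
         (forall n, tn n.+1 <= tn n) -> tn @ \oo --> t -> xn @ \oo --> x ->
         (fun n => phi (tn n) w (xn n)) @ \oo --> phi t w x)].

Definition transition (P : probability Omega R) (phi : R -> Omega -> X -> X)
    (t : R) (x : X) (A : set (Borel X)) : \bar R :=
  P ((fun w => phi t w x) @^-1` A).

Definition stationary (tZ : bool) (P : probability Omega R)
    (phi : R -> Omega -> X -> X) (rho : probability (Borel X) R) :=
  forall t, Tplus tZ t -> forall A : set (Borel X), measurable A ->
    rho A = (\int[rho]_x transition P phi t x A)%E.

Definition Theta (theta : R -> Omega -> Omega) (phi : R -> Omega -> X -> X)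
    (t : R) : (Omega * Borel X)%type -> (Omega * Borel X)%type :=
  fun p => (theta t p.1, phi t p.1 p.2).

Definition Theta_invariant (tZ : bool) (theta : R -> Omega -> Omega)
    (phi : R -> Omega -> X -> X) (mu : probability (Omega * Borel X)%type R) :=
  forall t, Tplus tZ t -> forall S : set (Omega * Borel X)%type, measurable S ->
    mu (Theta theta phi t @^-1` S) = mu S.

Definition P_compatible (P : probability Omega R)
    (mu : probability (Omega * Borel X)%type R) :=
  forall A : set Omega, measurable A -> mu (A `*` setT) = P A.

Definition invariant_measure (tZ : bool) (P : probability Omega R)
    (theta : R -> Omega -> Omega) (phi : R -> Omega -> X -> X)
    (mu : probability (Omega * Borel X)%type R) :=
  P_compatible P mu /\ Theta_invariant tZ theta phi mu.

Definition disintegration (P : probability Omega R)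
    (mu : probability (Omega * Borel X)%type R)
    (k : Omega -> probability (Borel X) R) :=
  (forall B : set (Borel X), measurable B -> measurable_fun setT (fun w => k w B)) /\
  (forall S : set (Omega * Borel X)%type, measurable S ->
     mu S = (\int[P]_w k w [set x | S (w, x)])%E).

Definition past_measurable (tZ : bool) (Fil : R -> R -> set (set Omega))
    (P : probability Omega R) (mu : probability (Omega * Borel X)%type R) :=
  exists k : Omega -> probability (Borel X) R,
    disintegration P mu k /\
    forall B : set (Borel X), measurable B ->
      forall E : set (\bar R), measurable E -> Past tZ Fil 0 ((fun w => k w B) @^-1` E).

Definition X_marginal (mu : probability (Omega * Borel X)%type R)
    (rho : probability (Borel X) R) :=
  forall B : set (Borel X), measurable B -> mu (setT `*` B) = rho B.

Definition future_prod (tZ : bool) (Fil : R -> R -> set (set Omega)) :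
    set (set (Omega * Borel X)%type) :=
  <<s [set C | exists (A : set Omega) (B : set (Borel X)),
          [/\ Future tZ Fil 0 A, measurable B & C = A `*` B]] >>.

Definition restr_is_product (tZ : bool) (Fil : R -> R -> set (set Omega))
    (P : probability Omega R) (rho : probability (Borel X) R)
    (mu : probability (Omega * Borel X)%type R) :=
  forall S, future_prod tZ Fil S -> mu S = (P \x rho)%E S.

End RDS.

(* Main.v *)
Require Import Defs.
From HB Require Import structures.
From mathcomp Require Import all_boot all_order all_algebra.
From mathcomp Require Import all_classical all_reals all_analysis.
From mathcomp Require Import measurable_realfun.
From mathcomp Require Import ring lra.
Import Order.TTheory GRing.Theory Num.Theory.
Import numFieldNormedType.Exports.
Local Open Scope classical_set_scope.
Local Open Scope ring_scope.
Section Aux.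
Context (R : realType) (tZ : bool).

Lemma TsetD (a b : R) : Tset tZ a -> Tset tZ b -> Tset tZ (a + b).
Proof.
rewrite /Tset; case: tZ => //= -[za ->] [zb ->]; exists (za + zb).
by rewrite rmorphD.
Qed.

Lemma TsetN (a : R) : Tset tZ a -> Tset tZ (- a).
Proof.
rewrite /Tset; case: tZ => //= -[za ->]; exists (- za).
by rewrite rmorphN.
Qed.

Lemma TsetB (a b : R) : Tset tZ a -> Tset tZ b -> Tset tZ (a - b).
Proof. by move=> ha hb; apply: TsetD => //; exact: TsetN. Qed.

Lemma Tset_nat (n : nat) : Tset tZ (n%:R : R).
Proof. rewrite /Tset; case: tZ => //=; exists (n%:Z); by rewrite -pmulrn. Qed.

Lemma Tset0 : Tset tZ (0 : R).
Proof. exact: (Tset_nat 0). Qed.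

Lemma Tplus_nat (n : nat) : Tplus tZ (n%:R : R).
Proof. by split; [exact: Tset_nat|exact: ler0n]. Qed.

Lemma exists_nat_below (s : R) : exists n : nat, - (n%:R) <= s.
Proof.
exists (Num.bound `|s|); rewrite lerNl.
apply: le_trans (ltW (archi_boundP (normr_ge0 s))).
by rewrite -normrN ler_norm.
Qed.
End Aux.
Arguments TsetD {R tZ a b}.
Arguments TsetN {R tZ a}.
Arguments TsetB {R tZ a b}.
Arguments Tset_nat {R} tZ n.
Arguments Tset0 {R} tZ.
Arguments Tplus_nat {R} tZ n.
Arguments exists_nat_below {R} s.

Lemma sigma_setI (T : pointedType) (G : set (set T)) (A B : set T) :
  <<s G >> A -> <<s G >> B -> <<s G >> (A `&` B).
Proof. move=> hA hB; exact: (@measurableI _ (g_sigma_algebraType G) A B). Qed.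

Section Fut.
Context (R : realType) (tZ : bool) (d : measure_display) (Omega : measurableType d)
  (Fil : R -> R -> set (set Omega)) (theta : R -> Omega -> Omega).
Hypothesis hF : is_filtration tZ Fil.
Hypothesis hS : is_shift tZ Fil theta.

Lemma Future_meas s : Tset tZ s -> Future tZ Fil s `<=` measurable.
Proof.
move=> Ts; apply: smallest_sub; first exact: sigma_algebra_measurable.
move=> A [t [[Tt t0] FA]]; case: hF => h1 _ _.
have hst : s <= s + t by rewrite lerDl.
have [_ sub] := h1 s (s + t) Ts (TsetD Ts Tt) hst.
exact: sub.
Qed.

Lemma Future_mono (n m : nat) : (n <= m)%N ->
  Future tZ Fil (- n%:R) `<=` Future tZ Fil (- m%:R).
Proof.
move=> nm; apply: smallest_sub; first exact: smallest_sigma_algebra.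
move=> A [t [[Tt t0] FA]]; apply: sub_sigma_algebra.
have hnm : (n%:R : R) <= m%:R by rewrite ler_nat.
exists (m%:R - n%:R + t); split.
  split; first exact: (TsetD (TsetB (Tset_nat tZ m) (Tset_nat tZ n)) Tt).
  by apply: addr_ge0 => //; rewrite subr_ge0.
have -> : - (m%:R : R) + (m%:R - n%:R + t) = - n%:R + t by ring.
case: hF => _ h2 _.
have Tnt := TsetD (TsetN (Tset_nat tZ n)) Tt.
have hn1 : - (m%:R : R) <= - n%:R by rewrite lerN2.
have hn2 : - (n%:R : R) <= - n%:R + t by rewrite lerDl.
exact: (h2 (- m%:R) (- n%:R) (- n%:R + t) (- n%:R + t)
  (TsetN (Tset_nat tZ m)) (TsetN (Tset_nat tZ n)) Tnt Tnt hn1 hn2 (lexx _)).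
Qed.

Lemma theta_inv (n : nat) (A : set Omega) :
  theta (n%:R) @^-1` A = theta (- n%:R) @` A.
Proof.
case: hS => _ th0 thD _.
have e1 : theta (n%:R) \o theta (- n%:R) = id.
  by rewrite -thD ?subrr ?th0 //; [exact: Tset_nat|exact: TsetN (Tset_nat tZ n)].
have e2 : theta (- n%:R) \o theta (n%:R) = id.
  by rewrite -thD ?addNr ?th0 //; [exact: TsetN (Tset_nat tZ n)|exact: Tset_nat].
rewrite eqEsubset; split => x.
  move=> Ax; exists (theta n%:R x) => //.
  by have := congr1 (fun f => f x) e2.
move=> [a Aa <-] /=.
by have := congr1 (fun f => f a) e1 => /= ->.
Qed.

Lemma Future_shift (n : nat) (A : set Omega) :
  Future tZ Fil (- n%:R) A -> Future tZ Fil 0 (theta (n%:R) @^-1` A).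
Proof.
move: A; apply: smallest_sub.
  split => /=.
  - by rewrite preimage_set0; exact: sigma_algebra0.
  - move=> A hA; rewrite setTD preimage_setC -setTD.
    exact: sigma_algebraCD.
  - by move=> F hF'; rewrite preimage_bigcup; exact: sigma_algebra_bigcup.
move=> A [t [[Tt t0] FA]] /=; rewrite theta_inv.
case: hS => _ _ _ h4.
have Tn : Tset tZ (- (n%:R : R)) by exact: TsetN (Tset_nat tZ n).
have := h4 (- n%:R) (- n%:R) (- n%:R + t) Tn Tn (TsetD Tn Tt).
rewrite lerDl => /(_ t0).
rewrite subrr (_ : - n%:R + t - - n%:R = t); last by ring.
move=> e; have : Fil 0 t (theta (- n%:R) @` A) by rewrite -e; exists A.
move=> h; apply: sub_sigma_algebra; exists t; split => //; by rewrite add0r.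
Qed.
End Fut.

Lemma small_inv (R : realType) (e : R) : 0 < e -> exists j : nat, (j.+1%:R : R)^-1 < e.
Proof.
move=> e0; exists (Num.bound (e^-1)).
rewrite invf_plt ?posrE //.
apply: (lt_le_trans (archi_boundP _)); first by rewrite invr_ge0 ltW.
by rewrite ler_nat.
Qed.

Arguments small_inv {R e}.

Lemma cont_ball (R : realType) (X : pseudoPMetricType R) (f : X -> X) (x : X) (e : R) :
  continuous f -> 0 < e -> exists2 del, 0 < del & forall z, ball x del z -> ball (f x) e (f z).
Proof.
move=> hf e0.
have /nbhs_ballP [del del0 hd] := hf x _ (nbhsx_ballx (f x) _ e0).
by exists del => // z /hd.
Qed.

Arguments cont_ball {R X f} x {e}.

Lemma closed_borel (R : realType) (X : pseudoPMetricType R) (C : set X) :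
  closed C -> measurable (C : set (Borel X)).
Proof.
move=> cC; rewrite -[C]setCK; apply: measurableC.
by apply: sub_sigma_algebra; exact: closed_openC.
Qed.

Lemma open_borel (R : realType) (X : pseudoPMetricType R) (C : set X) :
  open C -> measurable (C : set (Borel X)).
Proof. by move=> oC; apply: sub_sigma_algebra. Qed.

Section Carath.
Context (R : realType) (tZ : bool) (d : measure_display) (Omega : measurableType d)
  (Fil : R -> R -> set (set Omega)) (X : pseudoPMetricType R).

Definition gen0 : set (set (Omega * Borel X)%type) :=
  [set C | exists (A : set Omega) (B : set (Borel X)),
          [/\ Future tZ Fil 0 A, measurable B & C = A `*` B]].

Lemma mFP (S : set (Omega * Borel X)%type) :
  @measurable _ (g_sigma_algebraType gen0) S -> future_prod (X:=X) tZ Fil S.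
Proof. by []. Qed.

Lemma FutT : Future tZ Fil 0 setT.
Proof. exact: (@measurableT _ (g_sigma_algebraType _)). Qed.

Lemma fp_rect (A : set Omega) (B : set (Borel X)) :
  Future tZ Fil 0 A -> measurable B -> future_prod (X:=X) tZ Fil (A `*` B).
Proof. by move=> hA hB; apply: sub_sigma_algebra; exists A, B. Qed.

Lemma carath (f : Omega -> X -> X) :
  (exists D : set X, countable D /\ dense D) ->
  (forall w, continuous (f w)) ->
  (forall x (B : set (Borel X)), measurable B ->
     Future tZ Fil 0 ((fun w => f w x) @^-1` B)) ->
  forall U : set X, open U ->
    future_prod (X:=X) tZ Fil [set p : (Omega * Borel X)%type | U (f p.1 p.2)].
Proof.
move=> [D [cD dD]] hc hm U oU.
have /pcard_surjP [g gs] := cD.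
pose r j := (j.+1%:R : R)^-1.
have r0 j : 0 < r j by rewrite invr_gt0.
pose S j := [set w : X | ball w (r j + r j) `<=` U].
pose O (z : X) (k : nat) : set X := interior (ball z (r k)).
have -> : [set p : (Omega * Borel X)%type | U (f p.1 p.2)] =
  \bigcup_j \bigcup_k \bigcap_n
    ([set p : (Omega * Borel X)%type | ~ O (g n) k p.2] `|`
     [set p | closure (S j) (f p.1 (g n))]).
  rewrite eqEsubset; split => -[w x] /=.
  - move=> Ux.
    have /nbhs_ballP [eps eps0 heps] : nbhs (f w x) U.
      by move: oU; rewrite openE => /(_ _ Ux).
    have [j hj] := small_inv (divr_gt0 eps0 (ltr0n R 3)).
    have [del del0 hdel] := cont_ball x (hc w) (r0 j).
    have [k hk] := small_inv del0.
    exists j => //; exists k => // n _ /=.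
    have [Ox|nO] := pselect (O (g n) k x); [right | by left].
    apply: subset_closure => v hv.
    apply: heps.
    have h1 : ball x (r k) (g n) := ball_sym (interior_subset Ox).
    have h2 := hdel _ (le_ball (ltW hk) h1).
    apply: (le_ball _ (ball_triangle h2 hv)).
    rewrite /r in hj *; move: hj; set q := (_ ^-1); move=> hj; lra.
  - move=> [j _ [k _ hall]].
    have [del del0 hdel] := cont_ball x (hc w) (r0 j).
    pose e := Num.min del (r k / 2).
    have e0 : 0 < e by rewrite lt_min del0 divr_gt0.
    have [z [Iz Dz]] : (interior (ball x e) `&` D) !=set0.
      apply: dD; last exact: open_interior.
      by exists x; exact: nbhsx_ballx.
    have bz : ball x e z := interior_subset Iz.
    have [n _ zn] := gs z Dz.
    have Oxk : O (g n) k x.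
      rewrite zn; apply/nbhs_ballP; exists e => // v hv.
      apply: (le_ball _ (ball_triangle (ball_sym bz) hv)).
      have : e <= r k / 2 by rewrite ge_min lexx orbT.
      lra.
    have [//|Cz] := hall n I.
    have bfy : ball (f w x) (r j) (f w z).
      by apply: hdel; apply: (le_ball _ bz); rewrite ge_min lexx.
    move: Cz; rewrite /= zn => /(_ (ball (f w z) (r j)) (nbhsx_ballx _ _ (r0 j))).
    move=> [s [Ss bs]].
    apply: Ss; exact: (ball_triangle (ball_sym bs) (ball_sym bfy)).
apply: mFP.
apply: bigcupT_measurable => j; apply: bigcupT_measurable => k.
apply: bigcapT_measurable => n; apply: measurableU.
- have -> : [set p : (Omega * Borel X)%type | ~ O (g n) k p.2] =
      setT `*` (~` O (g n) k).
    by rewrite eqEsubset; split => -[a b] /=; [move=> h; split|case].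
  apply: sub_sigma_algebra; exists setT, (~` O (g n) k); split => //.
    exact: FutT.
  by apply: measurableC; apply: open_borel; exact: open_interior.
- have -> : [set p : (Omega * Borel X)%type | closure (S j) (f p.1 (g n))] =
      ((fun w => f w (g n)) @^-1` closure (S j)) `*` setT.
    by rewrite eqEsubset; split => -[a b] /=; [move=> h; split|case].
  apply: sub_sigma_algebra; exists ((fun w => f w (g n)) @^-1` closure (S j)), setT.
  split => //; apply: hm; apply: closed_borel; exact: closed_closure.
Qed.
End Carath.
Arguments gen0 {R} tZ {d Omega} Fil X.
Arguments mFP {R tZ d Omega Fil X}.
Arguments FutT {R} tZ {d Omega} Fil.
Arguments fp_rect {R tZ d Omega Fil X}.
Arguments carath {R tZ d Omega Fil X}.
Local Open Scope ereal_scope.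
Lemma mD0 (R : realType) : measurable [set y : \bar R | 0 < y].
Proof.
have -> : [set y : \bar R | 0 < y] = [set` `]0%E, +oo]].
  by apply/seteqP; split => y /=; rewrite in_itv /= ?leey ?andbT // => /andP[].
exact: emeasurable_itv.
Qed.

Lemma indep_int (R : realType) d (Omega : measurableType d) (P : probability Omega R)
  (A : set Omega) (g : Omega -> \bar R) :
  measurable A -> measurable_fun setT g -> (forall w, 0 <= g w) ->
  (forall E, measurable E -> P (A `&` g @^-1` E) = P A * P (g @^-1` E)) ->
  \int[P]_(w in A) g w = P A * \int[P]_w g w.
Proof.
move=> mA mg g0 hind.
pose D := [set y : \bar R | 0 < y].
pose h := g \_ A.
have h0 w : 0 <= h w by rewrite /h /patch; case: ifP.
have mh : measurable_fun setT h.
  by apply/(measurable_restrictT _ _).1 => //; exact: measurable_funS mg.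
have drop (f : Omega -> \bar R) : (forall w, 0 <= f w) ->
    \int[P]_(w in f @^-1` D) f w = \int[P]_w f w.
  move=> f0; rewrite integral_mkcond; apply: eq_integral => w _.
  rewrite /patch; case: ifPn => // /negP; rewrite inE /D /= => hw.
  by apply/le_anti/andP; split; [exact: f0 | rewrite leNgt; exact/negP].
rewrite integral_mkcond -/h -(drop h h0).
have -> : \int[P]_(w in h @^-1` D) h w = \int[pushforward P h]_(y in D) y.
  rewrite (ge0_integral_pushforward mh P (f:=id) (mD0 R)) //.
  by move=> y; rewrite inE /D /= => /ltW.
have PAfin : P A \is a fin_num by exact: fin_num_measure.
pose c := NngNum (fine_ge0 (measure_ge0 P A)).
rewrite (eq_measure_integral (mscale c (pushforward P g))); last first.
  move=> E mE ED; change (P (h @^-1` E) = (fine (P A))%:E * P (g @^-1` E)); rewrite fineK //.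
  have -> : h @^-1` E = A `&` g @^-1` E.
    apply/seteqP; split => w /=.
      rewrite /h /patch; case: ifPn => [|_ /ED]; first by rewrite inE.
      by rewrite /D /= ltxx.
    by move=> [Aw gE]; rewrite /h /patch; move/mem_set: Aw => ->.
  exact: hind.
rewrite (ge0_integral_mscale _ (mD0 R)) //; last first.
  by move=> y; rewrite /D /= => /ltW.
rewrite /c /= fineK //; congr (_ * _).
rewrite (ge0_integral_pushforward mg P (f:=id) (mD0 R)) //.
  by rewrite drop.
by move=> y; rewrite inE /D /= => /ltW.
Qed.

Section RestrMu.
Context (R : realType) (tZ : bool) (d : measure_display) (Omega : measurableType d)
  (Fil : R -> R -> set (set Omega)) (X : pseudoPMetricType R)
  (P : probability Omega R) (rho : probability (Borel X) R)
  (mu : probability (Omega * Borel X)%type R) (k : Omega -> probability (Borel X) R).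
Hypothesis hdis : disintegration P mu k.
Hypothesis hpast : forall B : set (Borel X), measurable B ->
  forall E : set (\bar R), measurable E -> Past tZ Fil 0 ((fun w => k w B) @^-1` E).
Hypothesis hmarg : X_marginal mu rho.
Hypothesis hind : forall A B, Past tZ Fil 0 A -> Future tZ Fil 0 B -> P (A `&` B) = P A * P B.
Hypothesis hFm : Future tZ Fil 0 `<=` measurable.

Lemma restr_mu : restr_is_product tZ Fil P rho mu.
Proof.
move=> S hS.
apply: (g_sigma_algebra_measure_unique (gen0 tZ Fil X) _ (fun _ => setT)) => //.
- by move=> _ [A [B [hA hB ->]]]; apply: measurableX => //; exact: hFm.
- by move=> _; exists setT, setT; split => //; [exact: FutT|rewrite setXTT].
- by apply/seteqP; split => // x _; exists 0%N.
- move=> _ _ [A1 [B1 [hA1 hB1 ->]]] [A2 [B2 [hA2 hB2 ->]]].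
  exists (A1 `&` A2), (B1 `&` B2); split; first exact: sigma_setI.
    exact: measurableI.
  by rewrite setXI.
- move=> _ [A [B [hA hB ->]]].
  have mA := hFm _ hA.
  transitivity (P A * rho B); last first. exact: (esym (product_measure1E P rho mA hB)). 
  case: hdis => hk1 hk2.
  have mAB : measurable (A `*` B) by exact: measurableX.
  transitivity (\int[P]_w k w [set x | (A `*` B) (w, x)]); first exact: hk2.
  have -> : rho B = \int[P]_w k w B.
    have mTB : measurable (@setT Omega `*` B) by exact: measurableX.
    transitivity (mu (setT `*` B)); first by rewrite hmarg.
    transitivity (\int[P]_w k w [set x | (setT `*` B) (w, x)]); first exact: hk2.
    apply: eq_integral => w _; congr (k w _).
    by apply/seteqP; split => x //= [].
  have -> : \int[P]_w k w [set x | (A `*` B) (w, x)] = \int[P]_(w in A) k w B.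
    rewrite [RHS]integral_mkcond; apply: eq_integral => w _.
    rewrite /patch; case: ifPn => [/set_mem Aw|/negP Aw].
      by congr (k w _); apply/seteqP; split => x /=; [case|split].
    rewrite (_ : [set x | (A `*` B) (w, x)] = set0) ?measure0 //.
    by apply/seteqP; split => x //= [/mem_set].
  apply: indep_int => //; first exact: hk1.
  move=> E mE; rewrite setIC hind; [exact: muleC | exact: hpast | exact: hA].
- move=> _; apply: (le_lt_trans (probability_le1 mu measurableT)); exact: ltey.
Qed.
End RestrMu.

Section CarathBorel.
Context (R : realType) (tZ : bool) (d : measure_display) (Omega : measurableType d)
  (Fil : R -> R -> set (set Omega)) (X : pseudoPMetricType R).

Lemma carath_borel (f : Omega -> X -> X) :
  (exists D : set X, countable D /\ dense D) ->
  (forall w, continuous (f w)) ->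
  (forall x (B : set (Borel X)), measurable B ->
     Future tZ Fil 0 ((fun w => f w x) @^-1` B)) ->
  forall B : set (Borel X), measurable B ->
    future_prod (X:=X) tZ Fil [set p : (Omega * Borel X)%type | B (f p.1 p.2)].
Proof.
move=> hD hc hm B mB.
pose T := g_sigma_algebraType (gen0 tZ Fil X).
pose C := [set B : set X | @measurable _ T [set p : (Omega * Borel X)%type | B (f p.1 p.2)]].
suff : C B by [].
apply: (@smallest_sub _ (sigma_algebra setT) (@open X) C) mB; last first.
  by move=> U oU; exact: (carath f hD hc hm U oU).
split.
- rewrite /C /=.
  have -> : [set p : (Omega * Borel X)%type | @set0 X (f p.1 p.2)] = set0.
    by apply/seteqP; split => p.
  exact: (@measurable0 _ T).
- move=> A hA; rewrite /C /=.
  have -> : [set p : (Omega * Borel X)%type | (setT `\` A) (f p.1 p.2)] =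
     setT `\` [set p : (Omega * Borel X)%type | A (f p.1 p.2)].
    by apply/seteqP; split => p.
  exact: (@measurableD _ T _ _ (@measurableT _ T) hA).
- move=> F hF; rewrite /C /=.
  have -> : [set p : (Omega * Borel X)%type | (\bigcup_n F n) (f p.1 p.2)] =
     \bigcup_n [set p : (Omega * Borel X)%type | F n (f p.1 p.2)].
    by apply/seteqP; split => p.
  exact: (@bigcupT_measurable _ T).
Qed.
End CarathBorel.
Arguments carath_borel {R tZ d Omega Fil X}.
Arguments Future_meas {R tZ d Omega Fil}.
Arguments Future_mono {R tZ d Omega Fil}.
Arguments Future_shift {R tZ d Omega Fil theta}.
Arguments restr_mu {R tZ d Omega Fil X P rho mu k}.

Local Close Scope ereal_scope.

Theorem proposition3p4 (R : realType) (tZ : bool)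
  (d : measure_display) (Omega : measurableType d)
  (Fil : R -> R -> set (set Omega)) (theta : R -> Omega -> Omega)
  (P : probability Omega R)
  (X : pseudoPMetricType R) (phi : R -> Omega -> X -> X)
  (rho : probability (Borel X) R)
  (mu_rho : probability (Omega * Borel X)%type R) :
  is_filtration tZ Fil ->
  is_shift tZ Fil theta ->
  memoryless_noise tZ Fil theta P ->
  good_space X ->
  is_RDS tZ Fil theta phi ->
  stationary tZ P phi rho ->
  (* mu_rho is the unique past-measurable invariant measure with X-marginal rho *)
  invariant_measure tZ P theta phi mu_rho ->
  past_measurable tZ Fil P mu_rho ->
  X_marginal mu_rho rho ->
  (forall nu : probability (Omega * Borel X)%type R,
     invariant_measure tZ P theta phi nu -> past_measurable tZ Fil P nu ->
     X_marginal nu rho ->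
     forall S : set (Omega * Borel X)%type, measurable S -> nu S = mu_rho S) ->
  (* conclusion *)
  Theta_invariant tZ theta phi mu_rho /\
  restr_is_product tZ Fil P rho mu_rho /\
  (forall mu' : probability (Omega * Borel X)%type R,
     Theta_invariant tZ theta phi mu' ->
     restr_is_product tZ Fil P rho mu' ->
     forall S : set (Omega * Borel X)%type, measurable S -> mu' S = mu_rho S).
Proof.
move=> hF hS hM hX hR _ [_ hinv] hpm hmarg _.
have hFm0 : Future tZ Fil 0 `<=` measurable := Future_meas hF 0 (Tset0 tZ).
have hind := hM.2 0 (Tset0 tZ).
have restr_rho : restr_is_product tZ Fil P rho mu_rho.
  by case: hpm => k [hdis hpast]; exact: (restr_mu hdis hpast hmarg hind hFm0).
split => //; split => // mu' hinv' hres' S mS.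
case: hX => _ hD _.
case: hR => hc hm _ _ _.
have hpre : forall (n : nat) A (B : set (Borel X)), Future tZ Fil (- n%:R) A ->
    measurable B ->
    future_prod (X:=X) tZ Fil (Theta theta phi n%:R @^-1` (A `*` B)).
  move=> n A B hA mB.
  have -> : Theta theta phi n%:R @^-1` (A `*` B) =
      (theta n%:R @^-1` A `*` setT) `&`
      [set p : (Omega * Borel X)%type | B (phi n%:R p.1 p.2)].
    by apply/seteqP; split => -[w x] /=; [case | move=> [[? _] ?]].
  apply: sigma_setI.
    apply: fp_rect => //; exact: (Future_shift hS n A hA).
  apply: (carath_borel (phi n%:R) hD) => //.
    by move=> w; apply: hc; exact: Tplus_nat.
  move=> x B' mB'; apply: sub_sigma_algebra; exists n%:R; split.
    exact: Tplus_nat.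
  by rewrite add0r; apply: hm => //; exact: Tplus_nat.
have agree : forall m : probability (Omega * Borel X)%type R,
    Theta_invariant tZ theta phi m -> restr_is_product tZ Fil P rho m ->
    forall (n : nat) A (B : set (Borel X)), Future tZ Fil (- n%:R) A ->
    measurable B ->
    m (A `*` B) = (P \x rho)%E (Theta theta phi n%:R @^-1` (A `*` B)).
  move=> m hi hr n A B hA mB.
  have mA : measurable A := Future_meas hF _ (TsetN (Tset_nat tZ n)) _ hA.
  rewrite -(hi n%:R (Tplus_nat tZ n) (A `*` B) (measurableX mA mB)).
  exact: hr _ (hpre n A B hA mB).
pose Pi := [set C : set (Omega * Borel X)%type | exists (n : nat) (A : set Omega)
  (B : set (Borel X)), [/\ Future tZ Fil (- n%:R) A, measurable B & C = A `*` B]].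
have FutT' : forall n : nat, Future tZ Fil (- n%:R) setT.
  by move=> n; exact: (@measurableT _ (g_sigma_algebraType _)).
have genPi : <<s Pi >> S.
  move: mS; rewrite measurable_prod_measurableType.
  apply: smallest_sub; first exact: smallest_sigma_algebra.
  move=> _ [A mA [B mB <-]].
  pose TP := g_sigma_algebraType Pi.
  pose CB := [set A' : set Omega | @measurable _ TP (A' `*` B)].
  suff : CB A by [].
  case: hF => _ h2 h3.
  rewrite h3 in mA.
  apply: (smallest_sub _ _ mA).
  + split.
    * by change (@measurable _ TP (set0 `*` B)); rewrite set0X; exact: (@measurable0 _ TP).
    * move=> A' hA'; change (@measurable _ TP ((setT `\` A') `*` B)).
      have -> : (setT `\` A') `*` B = (setT `*` B) `\` (A' `*` B).
        apply/seteqP; split => -[w x] /=.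
          by move=> [[_ nA] Bx]; split => //; move=> [].
        by move=> [[_ Bx] nAB]; split => //; split => // Aw; apply: nAB.
      apply: (@measurableD _ TP) => //.
      by apply: sub_sigma_algebra; exists 0%N, setT, B; split.
    * move=> F hF'; change (@measurable _ TP ((\bigcup_k F k) `*` B)); rewrite setX_bigcupl.
      exact: (@bigcupT_measurable _ TP).
  + move=> A' [s [t [Ts Tt st FA]]].
    have [n hn] := exists_nat_below s.
    apply: sub_sigma_algebra; exists n, A', B; split => //.
    apply: sub_sigma_algebra; exists (t + n%:R); split.
      split; first exact: (TsetD Tt (Tset_nat tZ n)).
      lra.
    rewrite (_ : - n%:R + (t + n%:R) = t); last by ring.
    exact: (h2 (- n%:R) s t t (TsetN (Tset_nat tZ n)) Ts Tt Tt hn st (lexx t) _ FA).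
apply: (g_sigma_algebra_measure_unique Pi _ (fun _ => setT)) => //.
- move=> _ [n [A [B [hA hB ->]]]]; apply: measurableX => //.
  exact: Future_meas hF _ (TsetN (Tset_nat tZ n)) _ hA.
- by move=> _; exists 0%N, setT, setT; split => //; rewrite setXTT.
- by apply/seteqP; split => // x _; exists 0%N.
- move=> _ _ [n1 [A1 [B1 [hA1 hB1 ->]]]] [n2 [A2 [B2 [hA2 hB2 ->]]]].
  exists (maxn n1 n2), (A1 `&` A2), (B1 `&` B2); split.
  + apply: sigma_setI.
      exact: (Future_mono hF _ _ (leq_maxl n1 n2)).
    exact: (Future_mono hF _ _ (leq_maxr n1 n2)).
  + exact: measurableI.
  + by rewrite setXI.
- move=> _ [n [A [B [hA hB ->]]]].
  exact: (etrans (agree mu' hinv' hres' n A B hA hB)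
    (esym (agree mu_rho hinv restr_rho n A B hA hB))).
- move=> _; apply: (le_lt_trans (probability_le1 mu' measurableT)); exact: ltey.
Qed.
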